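(* A Borel measurable function $f:\mathbb{R}^n\to\mathbb{R}$ is level convex if and only if for every $d\ge1$, every open set $\Omega\subseteq\mathbb{R}^d$, every Borel probability measure $\mu$ on $\mathbb{R}^d$ supported on $\Omega$ and every $\varphi\in L^1_\mu(\Omega;\mathbb{R}^n)$, $$f\Big(\int_\Omega\varphi\,d\mu\Big)\le\mu\text{-}\operatorname*{ess\,sup}_{x\in\Omega}f(\varphi(x)).$$ In particular, if $f$ is level convex and $\Omega$ has finite positive Lebesgue measure, then $f\big(\frac{1}{|\Omega|}\int_\Omega\varphi\,dx\big)\le\operatorname{ess\,sup}_{x\in\Omega}f(\varphi(x))$ for every $\varphi\in L^1(\Omega;\mathbb{R}^n)$.
   Context: Level convex: $f(\lambda\xi+(1-\lambda)\eta)\le\max\{f(\xi),f(\eta)\}$ for all $\xi,\eta\in\mathbb{R}^n$ and $\lambda\in(0,1)$. $\mu\text{-}\operatorname{ess\,sup}$ denotes the essential supremum with respect to $\mu$. *)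

(* Defs.v *)
From HB Require Import structures.
From mathcomp Require Import all_boot all_order all_algebra.
From mathcomp Require Import all_classical all_reals all_analysis.
From mathcomp Require Import ess_sup_inf.

Set Implicit Arguments.
Unset Strict Implicit.
Unset Printing Implicit Defensive.

Import Order.TTheory GRing.Theory Num.Theory.
Import numFieldNormedType.Exports.

Local Open Scope classical_set_scope.
Local Open Scope ring_scope.

(* R^n is represented by row vectors 'rV[R]_n, with its usual (max-norm)
   topology; the Borel sigma-algebra on R^n is the one generated by its open
   sets. *)
Definition borelRn (R : realType) (n : nat) := g_sigma_algebraType (@open 'rV[R]_n).

Definition level_convex (R : realType) (n : nat) (f : 'rV[R]_n -> R) : Prop :=
  forall (xi eta : 'rV[R]_n) (l : R), 0 < l < 1 ->
    f (l *: xi + (1 - l) *: eta) <= Num.max (f xi) (f eta).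

Definition borel_measurable_Rn (R : realType) (n : nat) (f : 'rV[R]_n -> R) : Prop :=
  @measurable_fun _ _ (borelRn R n) R setT f.

Definition L1_on (R : realType) (d n : nat)
    (mu : {measure set (borelRn R d) -> \bar R}) (Omega : set (borelRn R d))
    (phi : borelRn R d -> 'rV[R]_n) : Prop :=
  forall i : 'I_n, mu.-integrable Omega (fun x => (phi x ord0 i)%:E).

Definition vint (R : realType) (d n : nat)
    (mu : {measure set (borelRn R d) -> \bar R}) (Omega : set (borelRn R d))
    (phi : borelRn R d -> 'rV[R]_n) : 'rV[R]_n :=
  \row_(i < n) fine (\int[mu]_(x in Omega) (phi x ord0 i)%:E)%E.

Definition ess_sup_on (R : realType) (d : nat)
    (mu : {measure set (borelRn R d) -> \bar R}) (Omega : set (borelRn R d))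
    (g : borelRn R d -> R) : \bar R :=
  ess_sup mu (fun x => if x \in Omega then (g x)%:E else -oo%E).

Definition is_lebesgue_Rd (R : realType) (d : nat)
    (lam : {measure set (borelRn R d) -> \bar R}) : Prop :=
  forall a b : 'rV[R]_d, (forall i, a ord0 i <= b ord0 i) ->
    lam [set x : borelRn R d | forall i, a ord0 i < x ord0 i <= b ord0 i]
    = (\prod_(i < d) (b ord0 i - a ord0 i))%:E.

(* Main.v *)
Require Import Defs.
From HB Require Import structures.
From mathcomp Require Import all_boot all_order all_algebra.
From mathcomp Require Import all_classical all_reals all_analysis.
From mathcomp Require Import ess_sup_inf.
From mathcomp Require Import ring lra.

Set Implicit Arguments.
Unset Strict Implicit.
Unset Printing Implicit Defensive.

Import Order.TTheory GRing.Theory Num.Theory.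
Import numFieldNormedType.Exports.

Local Open Scope classical_set_scope.
Local Open Scope ring_scope.

Section Sep.
Variable R : realType.

Definition dotv n (a v : 'rV[R]_n) : R := \sum_i a ord0 i * v ord0 i.
Definition convexS n (K : set 'rV[R]_n) :=
  forall u v (l : R), K u -> K v -> 0 < l < 1 -> K (l *: u + (1 - l) *: v).

Definition hd n (v : 'rV[R]_n.+1) : R := v ord0 ord0.
Definition tl n (v : 'rV[R]_n.+1) : 'rV[R]_n := \row_i v ord0 (lift ord0 i).
Definition cns n (a : R) (w : 'rV[R]_n) : 'rV[R]_n.+1 :=
  \row_i (match unlift ord0 i with Some k => w ord0 k | None => a end).

Lemma hd_cns n a (w : 'rV[R]_n) : hd (cns a w) = a.
Proof. by rewrite /hd /cns mxE unlift_none. Qed.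
Lemma tl_cns n a (w : 'rV[R]_n) : tl (cns a w) = w.
Proof. by apply/rowP => i; rewrite /tl /cns !mxE liftK (ord1 ord0). Qed.
Lemma cns_hdtl n (v : 'rV[R]_n.+1) : cns (hd v) (tl v) = v.
Proof.
apply/rowP => i; rewrite /cns mxE; case: unliftP => [k ->|->].
  by rewrite mxE.
by [].
Qed.
Lemma hd_comb n l k (u v : 'rV[R]_n.+1) : hd (l *: u + k *: v) = l * hd u + k * hd v.
Proof. by rewrite /hd !mxE. Qed.
Lemma tl_comb n l k (u v : 'rV[R]_n.+1) : tl (l *: u + k *: v) = l *: tl u + k *: tl v.
Proof. by apply/rowP => i; rewrite /tl !mxE. Qed.
Lemma dotv_comb n (a u v : 'rV[R]_n) l k :
  dotv a (l *: u + k *: v) = l * dotv a u + k * dotv a v.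
Proof.
rewrite /dotv !mulr_sumr -big_split /=; apply: eq_bigr => i _; rewrite !mxE; ring.
Qed.
Lemma dotv_cns n (a v : 'rV[R]_n.+1) : dotv a v = hd a * hd v + dotv (tl a) (tl v).
Proof. by rewrite /dotv big_ord_recl; congr (_ + _); apply: eq_bigr => i _; rewrite !mxE. Qed.
Lemma dotv0 n (a : 'rV[R]_n) : dotv a 0 = 0.
Proof. by rewrite /dotv big1 // => i _; rewrite mxE mulr0. Qed.
Lemma dotvD n (a u v : 'rV[R]_n) : dotv a (u + v) = dotv a u + dotv a v.
Proof. by rewrite /dotv -big_split; apply: eq_bigr => i _; rewrite !mxE mulrDr. Qed.
Lemma dotvN n (a u : 'rV[R]_n) : dotv a (- u) = - dotv a u.
Proof. by rewrite /dotv -sumrN; apply: eq_bigr => i _; rewrite !mxE mulrN. Qed.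

Lemma cns_eq0 n (v : 'rV[R]_n.+1) : hd v = 0 -> tl v = 0 -> v = 0.
Proof.
move=> h t; rewrite -(cns_hdtl v) h t; apply/rowP => i; rewrite /cns !mxE.
by case: unlift => // k; rewrite mxE.
Qed.

Lemma zero_head_comb n (u v : 'rV[R]_n.+1) :
  0 < hd u -> hd v < 0 ->
  let t := - hd v / (hd u - hd v) in
  0 < t < 1 /\ hd (t *: u + (1 - t) *: v) = 0.
Proof.
move=> hu hv t; have hp : 0 < hd u - hd v by lra.
have hne : hd u - hd v != 0 by rewrite gt_eqF.
split.
  apply/andP; split; first by rewrite /t divr_gt0 // oppr_gt0.
  by rewrite /t ltr_pdivrMr // mul1r; lra.
rewrite hd_comb /t; field; done.
Qed.

Lemma sep_main n (K : set 'rV[R]_n.+1) :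
  (forall (K' : set 'rV[R]_n), convexS K' -> ~ K' 0 ->
     exists a, (a != 0 \/ K' = set0) /\ forall v, K' v -> 0 <= dotv a v) ->
  convexS K -> ~ K 0 -> ~ (exists v, K v /\ hd v <= 0 /\ tl v = 0) ->
  exists a, a != 0 /\ forall v, K v -> 0 <= dotv a v.
Proof.
move=> IH cK K0 nz.
have [neg|noneg] := pselect (exists v, K v /\ hd v < 0); last first.
  exists (cns 1 0); split.
    by apply/eqP => /(congr1 (@hd _)); rewrite hd_cns /hd mxE => /eqP; rewrite oner_eq0.
  move=> v Kv; rewrite dotv_cns hd_cns tl_cns /dotv big1 ?addr0 ?mul1r.
    by rewrite leNgt; apply/negP => h; apply: noneg; exists v.
  by move=> i _; rewrite mxE mul0r.
pose A := [set w | exists v, K v /\ hd v <= 0 /\ tl v = w].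
have cA : convexS A.
  move=> w1 w2 l [v1 [K1 [h1 <-]]] [v2 [K2 [h2 <-]]] hl.
  exists (l *: v1 + (1 - l) *: v2); split; first exact: cK.
  split; last by rewrite tl_comb.
  rewrite hd_comb; move: hl => /andP[l0 l1]; nra.
have A0 : ~ A 0 by move=> [v [Kv [h t]]]; apply: nz; exists v.
have [l' [l'nz l'pos]] := IH A cA A0.
have {l'nz} l'nz : l' != 0.
  case: l'nz => // A0'; case: neg => v [Kv hv].
  have : A (tl v) by exists v; split => //; split => //; exact: ltW.
  by rewrite A0'.
pose S := [set r | exists v, K v /\ hd v < 0 /\ r = dotv l' (tl v) / (- hd v)].
have Sne : S !=set0.
  by case: neg => v [Kv hv]; exists (dotv l' (tl v) / (- hd v)); exists v.
have Slb : has_lbound S.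
  exists 0 => r [v [Kv [hv ->]]]; apply: divr_ge0; last by rewrite oppr_ge0 ltW.
  by apply: l'pos; exists v; split => //; split => //; exact: ltW.
pose a := inf S.
have pair u v : K u -> K v -> 0 < hd u -> hd v < 0 ->
    - (dotv l' (tl u) / hd u) <= dotv l' (tl v) / (- hd v).
  move=> Ku Kv hu hv.
  have [t01 ht] := zero_head_comb hu hv.
  set t := - hd v / _ in t01 ht.
  have : A (tl (t *: u + (1 - t) *: v)).
    by exists (t *: u + (1 - t) *: v); split; [exact: cK|split => //; rewrite ht].
  move/l'pos; rewrite tl_comb dotv_comb => H.
  set p := dotv l' (tl u) in H *; set q := dotv l' (tl v) in H *.
  have e1 : t = - hd v / (hd u - hd v) by [].
  have hp : 0 < hd u - hd v by lra.
  rewrite e1 in H.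
  have H2 : 0 <= - hd v * p + hd u * q.
    have : 0 <= (- hd v / (hd u - hd v) * p + (1 - - hd v / (hd u - hd v)) * q) * (hd u - hd v).
      by apply: mulr_ge0 => //; exact: ltW.
    have -> : (- hd v / (hd u - hd v) * p + (1 - - hd v / (hd u - hd v)) * q) * (hd u - hd v)
        = - hd v * p + hd u * q.
      by field; rewrite gt_eqF.
    by [].
  rewrite -subr_ge0.
  have -> : q / - hd v - - (p / hd u) = (- hd v * p + hd u * q) / (hd u * - hd v).
    by field; rewrite lt_eqF // gt_eqF.
  by apply: divr_ge0 => //; apply: mulr_ge0; lra.
exists (cns a l'); split.
  by apply/eqP => /(congr1 (@tl _)); rewrite tl_cns; apply/eqP; rewrite /tl; apply: contra l'nz => /eqP ->; apply/eqP/rowP => i; rewrite !mxE.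
move=> v Kv; rewrite dotv_cns hd_cns tl_cns.
have [hv|hv|hv] := ltgtP (hd v) 0.
- have : a <= dotv l' (tl v) / (- hd v) by apply: (ge_inf Slb); exists v.
  move=> h.
  have e : dotv l' (tl v) = (dotv l' (tl v) / (- hd v)) * (- hd v) by field; rewrite lt_eqF.
  rewrite e; move: h; set x := dotv l' (tl v) / _ => h; nra.
- have : - (dotv l' (tl v) / hd v) <= a.
    apply: lb_le_inf => // r [w [Kw [hw ->]]]; exact: pair.
  move=> h.
  have e : dotv l' (tl v) = (dotv l' (tl v) / hd v) * hd v by field; rewrite gt_eqF.
  rewrite e; move: h; set x := dotv l' (tl v) / hd v => h; nra.
- rewrite hv mulr0 add0r; apply: l'pos; exists v; split => //; split => //; by rewrite hv.
Qed.

Definition refl n (v : 'rV[R]_n.+1) := cns (- hd v) (tl v).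

Lemma cns_comb n l k a b (w1 w2 : 'rV[R]_n) :
  cns (l * a + k * b) (l *: w1 + k *: w2) = l *: cns a w1 + k *: cns b w2.
Proof. by apply/rowP => i; rewrite /cns !mxE; case: unlift => // j; rewrite !mxE. Qed.

Lemma refl_comb n l k (u v : 'rV[R]_n.+1) :
  refl (l *: u + k *: v) = l *: refl u + k *: refl v.
Proof. by rewrite /refl -cns_comb hd_comb tl_comb; congr cns; ring. Qed.

Lemma reflK n (v : 'rV[R]_n.+1) : refl (refl v) = v.
Proof. by rewrite /refl hd_cns tl_cns opprK cns_hdtl. Qed.

Lemma refl0 n : refl (0 : 'rV[R]_n.+1) = 0.
Proof. by apply: cns_eq0; rewrite ?hd_cns ?tl_cns /hd /tl ?mxE ?oppr0 //; apply/rowP => i; rewrite !mxE. Qed.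

Lemma dotv_refl n (a v : 'rV[R]_n.+1) : dotv (refl a) v = dotv a (refl v).
Proof. by rewrite !dotv_cns /refl !hd_cns !tl_cns; ring. Qed.

Lemma separation n (K : set 'rV[R]_n) : convexS K -> ~ K 0 ->
  exists a, (a != 0 \/ K = set0) /\ forall v, K v -> 0 <= dotv a v.
Proof.
elim: n K => [|n IH] K cK K0.
  exists 0; split; last by move=> v _; rewrite /dotv big_ord0.
  by right; apply/seteqP; split => // v Kv; apply: K0; rewrite -(thinmx0 v).
have [[v0 [K0v [h0 t0]]]|nz] := pselect (exists v, K v /\ hd v <= 0 /\ tl v = 0); last first.
  by have [a [a0 H]] := sep_main IH cK K0 nz; exists a; split => //; left.
have hv0 : hd v0 < 0.
  rewrite lt_neqAle h0 andbT; apply/eqP => e; apply: K0.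
  by rewrite -(cns_eq0 e t0).
pose K' := [set v | K (refl v)].
have cK' : convexS K'.
  by move=> u v l Ku Kv hl; rewrite /K' /= refl_comb; apply: cK.
have K'0 : ~ K' 0 by rewrite /K' /= refl0.
have nz : ~ (exists v, K' v /\ hd v <= 0 /\ tl v = 0).
  move=> [v [Kv [hv tv]]].
  set u := refl v in Kv.
  have tu : tl u = 0 by rewrite /u /refl tl_cns.
  have hu : 0 < hd u.
    rewrite /u /refl hd_cns lt_neqAle oppr_ge0 hv andbT eq_sym oppr_eq0.
    apply/eqP => e; apply: K0; rewrite -(cns_eq0 _ tu) //.
    by rewrite /u /refl hd_cns e oppr0.
  have [t01 ht] := zero_head_comb hu hv0.
  apply: K0; set t := - hd v0 / _ in t01 ht.
  have <- : t *: u + (1 - t) *: v0 = 0.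
    by apply: cns_eq0 => //; rewrite tl_comb tu t0 !scaler0 addr0.
  exact: cK.
have [a [anz H]] := sep_main IH cK' K'0 nz.
exists (refl a); split.
  left; apply: contra anz => /eqP e; apply/eqP.
  by rewrite -(reflK a) e refl0.
by move=> v Kv; rewrite dotv_refl; apply: H; rewrite /K' /= reflK.
Qed.

End Sep.

Section DelIns.
Variable R : realType.
Definition del n (j : 'I_n.+1) (v : 'rV[R]_n.+1) : 'rV[R]_n := \row_i v ord0 (lift j i).
Definition ins n (a : 'rV[R]_n.+1) (j : 'I_n.+1) (b : R) (w : 'rV[R]_n) : 'rV[R]_n.+1 :=
  \row_i match unlift j i with
         | Some k => w ord0 k
         | None => (b - \sum_k a ord0 (lift j k) * w ord0 k) / a ord0 j end.

Lemma insdel n (a v : 'rV[R]_n.+1) j b : a ord0 j != 0 -> dotv a v = b ->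
  ins a j b (del j v) = v.
Proof.
move=> aj <-; apply/rowP => i; rewrite mxE; case: unliftP => [k ->|->].
  by rewrite mxE.
rewrite /dotv (bigD1_ord j) //=.
under [X in _ - X]eq_bigr do rewrite mxE.
by field.
Qed.

Lemma ins_comb n (a : 'rV[R]_n.+1) j b (u w : 'rV[R]_n) l : a ord0 j != 0 ->
  ins a j b (l *: u + (1 - l) *: w) = l *: ins a j b u + (1 - l) *: ins a j b w.
Proof.
move=> aj; apply/rowP => i; rewrite !mxE; case: unlift => [k|]; first by rewrite !mxE.
have -> : \sum_k a ord0 (lift j k) * (l *: u + (1 - l) *: w) ord0 k =
   l * \sum_k a ord0 (lift j k) * u ord0 k + (1 - l) * \sum_k a ord0 (lift j k) * w ord0 k.
  rewrite !mulr_sumr -big_split /=; apply: eq_bigr => k _; rewrite !mxE; ring.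
by field.
Qed.
End DelIns.

Section Bary.
Context {R : realType} {dd : measure_display} {T : measurableType dd}.
Variable mu : {measure set T -> \bar R}.

Definition vintg n (D : set T) (phi : T -> 'rV[R]_n) : 'rV[R]_n :=
  \row_(i < n) fine (\int[mu]_(x in D) (phi x ord0 i)%:E)%E.

Lemma ae_exists (D : set T) (P : T -> Prop) : measurable D -> (0 < mu D)%E ->
  (\forall x \ae mu, D x -> P x) -> exists x, D x /\ P x.
Proof.
move=> mD muD [N [mN muN sub]]; apply: contrapT => nE.
have : mu D = 0%E.
  apply: (subset_measure0 mD mN) => // x Dx; apply: sub => /= HP.
  by apply: nE; exists x; split => //; exact: HP.
by move=> e; rewrite e ltxx in muD.
Qed.


Lemma dotvZ n (a v : 'rV[R]_n) k : dotv a (k *: v) = k * dotv a v.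
Proof. by rewrite /dotv mulr_sumr; apply: eq_bigr => i _; rewrite mxE; ring. Qed.

Lemma bary n (K : set 'rV[R]_n) (D : set T) (phi : T -> 'rV[R]_n) :
  measurable D -> (0 < mu D)%E -> (mu D < +oo)%E -> convexS K ->
  (forall i, mu.-integrable D (fun x => (phi x ord0 i)%:E)) ->
  (\forall x \ae mu, D x -> K (phi x)) ->
  K ((fine (mu D))^-1 *: vintg D phi).
Proof.
move=> mD muD0 muDoo.
elim: n K phi => [|n IH] K phi cK iphi aeK.
  have [x [_ Kx]] := ae_exists mD muD0 aeK.
  by rewrite (thinmx0 (_ *: _)) -(thinmx0 (phi x)).
have muDE : mu D = (fine (mu D))%:E by rewrite fineK // ge0_fin_numE.
have fmu0 : fine (mu D) != 0.
  by apply/eqP => e; rewrite muDE e lte_fin ltxx in muD0.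
set c := (fine (mu D))^-1.
set m := c *: vintg D phi.
have [//|nKm] := pselect (K m).
pose Km := [set v | K (v + m)].
have cKm : convexS Km.
  move=> u v l Ku Kv hl; rewrite /Km /=.
  have <- : l *: (u + m) + (1 - l) *: (v + m) = l *: u + (1 - l) *: v + m.
    by rewrite !scalerDr addrACA -scalerDl [l + _]addrC subrK scale1r.
  exact: cK.
have Km0 : ~ Km 0 by rewrite /Km /= add0r.
have [a [anz Ha]] := separation cKm Km0.
have [x0 [Dx0 Kx0]] := ae_exists mD muD0 aeK.
have {}anz : a != 0.
  case: anz => // e; have : Km (phi x0 - m) by rewrite /Km /= subrK.
  by rewrite e.
set b := dotv a m.
have HK v : K v -> b <= dotv a v.
  move=> Kv; have := Ha (v - m); rewrite /Km /= subrK => /(_ Kv).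
  by rewrite dotvD dotvN subr_ge0.
have ih : mu.-integrable D (fun x => (dotv a (phi x))%:E).
  apply: (eq_integrable mD (fun x => \sum_i (a ord0 i)%:E * (phi x ord0 i)%:E)%E).
    by move=> x _; rewrite /dotv -sumEFin; apply: eq_bigr => i _; rewrite EFinM.
  by apply: integrable_sum => // i _; apply: integrableZl.
have int_h : (\int[mu]_(x in D) (dotv a (phi x))%:E = (dotv a (vintg D phi))%:E)%E.
  rewrite (eq_integral (fun x => \sum_(i < n.+1) (a ord0 i)%:E * (phi x ord0 i)%:E)%E); last first.
    by move=> x _; rewrite /dotv -sumEFin; apply: eq_bigr => i _; rewrite EFinM.
  rewrite integral_sum //; last by move=> i; apply: integrableZl.
  rewrite /dotv -sumEFin; apply: eq_bigr => i _; rewrite integralZl // mxE EFinM fineK //.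
  exact: integrable_fin_num.
have hb : b * fine (mu D) = dotv a (vintg D phi).
  by rewrite /b /m dotvZ /c mulrAC mulVf // mul1r.
have icst : mu.-integrable D (fun _ => b%:E).
  apply/integrableP; split; first exact: measurable_cst.
  rewrite [X in (X < _)%E](_ : _ = (`|b|%:E * mu D)%E); last exact: integral_cst.
  by apply: lte_mul_pinfty.
pose g x := dotv a (phi x) - b.
have ig : mu.-integrable D (EFin \o g).
  apply: (eq_integrable mD (fun x => (dotv a (phi x))%:E - b%:E)%E) => //.
  exact: integrableB.
have intg : (\int[mu]_(x in D) (g x)%:E = 0)%E.
  rewrite (eq_integral (fun x => (dotv a (phi x))%:E - b%:E)%E) //.
  rewrite integralB_EFin // int_h.
  rewrite [X in (_ - X)%E](_ : _ = (b%:E * mu D)%E); last exact: integral_cst.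
  by rewrite muDE -EFinM -EFinB hb subrr.
have ge0g : \forall x \ae mu, D x -> K (phi x) /\ 0 <= g x.
  apply: filterS aeK => x H Dx; split; first exact: H.
  by rewrite subr_ge0; apply: HK; exact: H.
have g0 : \forall x \ae mu, D x -> (g x)%:E = 0%E.
  have mg := measurable_int mu ig.
  apply/(ae_eq_integral_abs mu mD mg).
  rewrite -[RHS]intg; apply: ae_eq_integral => //.
    exact: (measurable_int mu (integrable_abse ig)).
  apply: filterS ge0g => x H Dx /=.
  by rewrite ger0_norm //; exact: (H Dx).2.
have [j aj] : exists j, a ord0 j != 0.
  case/boolP: [exists j, a ord0 j != 0] => [/existsP//|/existsPn H].
  move/eqP: anz; case; apply/rowP => i; rewrite !mxE; exact/eqP/negPn/H.
pose K' := [set w | K (ins a j b w)].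
have cK' : convexS K'.
  by move=> u w l Ku Kw hl; rewrite /K' /= ins_comb //; apply: cK.
have iphi' i : mu.-integrable D (fun x => (del j (phi x) ord0 i)%:E).
  apply: (eq_integrable mD (fun x => (phi x ord0 (lift j i))%:E)) => //.
  by move=> x _; rewrite mxE.
have ae' : \forall x \ae mu, D x -> K' (del j (phi x)).
  apply: filterS2 ge0g g0 => x H1 H2 Dx; rewrite /K' /= insdel //.
    exact: (H1 Dx).1.
  by move: (H2 Dx) => /eqP; rewrite eqe subr_eq0 => /eqP.
have := IH K' (fun x => del j (phi x)) cK' iphi' ae'.
rewrite /K' /=.
have -> : c *: vintg D (fun x => del j (phi x)) = del j m.
  by apply/rowP => i; rewrite !mxE; congr (_ * fine _); apply: eq_integral => x _; rewrite mxE.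
by rewrite insdel.
Qed.

End Bary.

Lemma jensen (R : realType) n (f : 'rV[R]_n -> R) (dd : measure_display)
  (T : measurableType dd) (mu : {measure set T -> \bar R}) (D : set T)
  (phi : T -> 'rV[R]_n) :
  level_convex f -> measurable D -> (0 < mu D)%E -> (mu D < +oo)%E ->
  (forall i, mu.-integrable D (fun x => (phi x ord0 i)%:E)) ->
  ((f ((fine (mu D))^-1 *: vintg mu D phi))%:E <=
     ess_sup mu (fun x => if x \in D then (f (phi x))%:E else -oo))%E.
Proof.
move=> lc mD mu0 muoo iphi.
set h := fun x => _.
have hge := ess_sup_ge mu h.
move: hge; case: (ess_sup mu h) => [t| |] hge.
- rewrite lee_fin.
  pose K := [set v | f v <= t].
  have cK : convexS K.
    move=> u v l Ku Kv hl; rewrite /K /=; apply: le_trans (lc u v l hl) _.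
    by rewrite ge_max; apply/andP; split.
  apply: (bary mD mu0 muoo cK iphi).
  by apply: filterS hge => x H Dx; move: H; rewrite /h (mem_set Dx) lee_fin.
- by rewrite leey.
- exfalso.
  have : \forall x \ae mu, D x -> False.
    by apply: filterS hge => x H Dx; move: H; rewrite /h (mem_set Dx) leeNy_eq.
  by move/(ae_exists mD mu0) => [x []].
Qed.

Lemma int_cst (R : realType) (dd : measure_display) (T : measurableType dd)
  (mu : {measure set T -> \bar R}) (D : set T) (k : R) :
  measurable D -> (mu D < +oo)%E -> mu.-integrable D (fun _ => k%:E).
Proof.
move=> mD muoo; apply/integrableP; split; first exact: measurable_cst.
rewrite [X in (X < _)%E](_ : _ = (`|k|%:E * mu D)%E); last exact: integral_cst.
by apply: lte_mul_pinfty.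
Qed.

Lemma measurable_open (R : realType) d (O : set 'rV[R]_d) :
  open O -> measurable (O : set (borelRn R d)).
Proof. by move=> oO; exact: sub_sigma_algebra. Qed.

Section Mix.
Variables (R : realType) (d : nat) (p : R) (p0 : 0 <= p) (p1 : p <= 1)
  (a b : borelRn R d).
Definition q0 : 0 <= 1 - p. Proof. by rewrite subr_ge0. Qed.
Definition mixm := @measure_add _ (borelRn R d) R (mscale (NngNum p0) \d_a)
  (mscale (NngNum q0) \d_b).
Lemma mixm_setT : mixm setT = 1%E.
Proof.
rewrite /mixm measure_addE; change ((p%:E * ((a \in [set: borelRn R d])%:R)%:E) + ((1 - p)%:E * ((b \in [set: borelRn R d])%:R)%:E) = 1)%E.
rewrite !in_setT !mule1 -EFinD; congr (_%:E); ring.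
Qed.
HB.instance Definition _ := Measure.on mixm.
HB.instance Definition _ := Measure_isProbability.Build _ _ _ mixm mixm_setT.
End Mix.

Unset Implicit Arguments.

Theorem mainTheorem20 (R : realType) (n : nat) (f : 'rV[R]_n -> R) :
  borel_measurable_Rn f ->
  (level_convex f <->
    (forall (d : nat) (Omega : set 'rV[R]_d)
            (mu : probability (borelRn R d) R)
            (phi : borelRn R d -> 'rV[R]_n),
        (0 < d)%N -> open Omega -> mu (~` Omega) = 0%E ->
        L1_on mu Omega phi ->
        ((f (vint mu Omega phi))%:E <= ess_sup_on mu Omega (fun x => f (phi x)))%E))
  /\
  (level_convex f ->
    forall (d : nat) (Omega : set 'rV[R]_d)
           (lam : {measure set (borelRn R d) -> \bar R})
           (phi : borelRn R d -> 'rV[R]_n),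
      (0 < d)%N -> open Omega -> is_lebesgue_Rd lam ->
      (0 < lam Omega)%E -> (lam Omega < +oo)%E ->
      L1_on lam Omega phi ->
      ((f ((fine (lam Omega))^-1 *: vint lam Omega phi))%:E
         <= ess_sup_on lam Omega (fun x => f (phi x)))%E).
Proof.
move=> fmeas; split; last first.
  move=> lc d Omega lam phi d0 oO leb l0 loo iphi.
  exact: (jensen lc (measurable_open oO) l0 loo iphi).
split.
  move=> lc d Omega mu phi d0 oO mu0 iphi.
  have mO := measurable_open oO.
  have muO : mu Omega = 1%E.
    by rewrite -(setCK Omega) probability_setC ?mu0 ?sube0 //; exact: measurableC.
  have {}muO : (mu : {measure set (borelRn R d) -> \bar R}) Omega = 1%E by exact: muO.
  have key : vint mu Omega phi = (fine (mu Omega))^-1 *: vint mu Omega phi.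
    by rewrite muO /= invr1 scale1r.
  rewrite {1}key; apply: (jensen lc mO) => //.
    by rewrite muO lte01.
  by rewrite muO ltry.
move=> H xi eta l hl.
have [l0 l1] : 0 <= l /\ l <= 1 by case/andP: hl => h1 h2; split; apply: ltW.
pose a : borelRn R 1 := 0.
pose b : borelRn R 1 := const_mx 1.
pose mu := mixm l0 l1 a b.
pose S := [set b] : set (borelRn R 1).
have ab : a != b.
  apply/eqP => /(congr1 (fun v : 'rV[R]_1 => v ord0 ord0)); rewrite /a /b !mxE.
  by move/eqP; rewrite eq_sym oner_eq0.
have mS : measurable S.
  rewrite -(setCK S); apply: measurableC; apply: sub_sigma_algebra.
  rewrite openC; apply: accessible_closed_set1; apply: hausdorff_accessible.
  exact: norm_hausdorff.
pose phi x : 'rV[R]_n := xi + (\1_S x) *: (eta - xi).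
have muS : mu S = (1 - l)%:E.
  rewrite /mu /mixm measure_addE.
  change ((l%:E * ((a \in S)%:R)%:E) + ((1 - l)%:E * ((b \in S)%:R)%:E) = (1 - l)%:E)%E.
  rewrite (mem_set (erefl b : S b)).
  rewrite memNset; last by move=> /= e; move: ab; rewrite e eqxx.
  by rewrite mule0 add0e mule1.
have {}muS : (mu : {measure set (borelRn R 1) -> \bar R}) S = (1 - l)%:E by exact: muS.
have muT : (mu : {measure set (borelRn R 1) -> \bar R}) setT = 1%E.
  exact: probability_setT.
have iphi : L1_on mu setT phi.
  move=> i.
  apply: (eq_integrable measurableT (fun x => (xi ord0 i)%:E + ((eta - xi) ord0 i)%:E * (\1_S x)%:E)%E).
    by move=> x _; rewrite /phi !mxE -EFinM -EFinD mulrC.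
  apply: integrableD => //; first by apply: int_cst => //; rewrite muT ltry.
  apply: integrableZl => //; exact: integrable_indic.
have vE : vint mu setT phi = l *: xi + (1 - l) *: eta.
  apply/rowP => i; rewrite !mxE.
  rewrite (eq_integral (fun x => (xi ord0 i)%:E + ((eta - xi) ord0 i)%:E * (\1_S x)%:E)%E); last first.
    by move=> x _; rewrite /phi !mxE -EFinM -EFinD mulrC.
  rewrite integralD //; last 2 first.
    by apply: int_cst => //; rewrite muT ltry.
    by apply: integrableZl => //; exact: integrable_indic.
  rewrite [X in (X + _)%E](_ : _ = ((xi ord0 i)%:E * (mu : {measure set (borelRn R 1) -> \bar R}) setT)%E); last exact: integral_cst.
  rewrite integralZl //; last exact: integrable_indic.
  rewrite integral_indic // setIT muS muT mule1 -EFinM -EFinD /= !mxE.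
  ring.
have := H 1%N setT mu phi (ltn0Sn 0) openT _ iphi.
rewrite setCT measure0 vE => /(_ erefl) J.
have E : (ess_sup_on mu setT (fun x => f (phi x)) <= (Num.max (f xi) (f eta))%:E)%E.
  apply/ess_supP; apply: nearW => x; rewrite (mem_set (I : setT x)) lee_fin.
  rewrite /phi indicE; case: (x \in S) => /=.
    by rewrite scale1r addrC subrK le_max lexx orbT.
  by rewrite scale0r addr0 le_max lexx.
by rewrite -lee_fin; exact: le_trans J E.
Qed.
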